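(* Let $V\geq 0$ be a nonsingular potential on $(-\infty,0]$ (as defined in the context). Let $\gamma_c>0$ be the critical value such that ${}^{\gamma}\mathcal{H}$ (with $\gamma>0$) has a negative eigenvalue exactly when $\gamma>\gamma_c$, and for $\gamma>\gamma_c$ let $E_\gamma<0$ denote this (unique) negative eigenvalue. Assume that $\lim_{\gamma\to\gamma_c^+}E_\gamma=0$. Then $$\gamma_c\leq\int_{-\infty}^0 V(x)\,dx.$$
   Context: A potential $V$ is called nonsingular if: $V$ is continuous on $(-\infty,0]$; as $x\to-\infty$ it decays exponentially, $V(x)=e^{\kappa x}\,(U+O(e^{\kappa x}))$ for some constants $\kappa>0$, $U\neq 0$; and near $x=0$ it has an expansion $V(x)=v_0+v_1x+v_2x^2+\dots$ with $v_0\neq 0$. For $\mathcal{H}=-\frac{d^2}{dx^2}+V(x)$ on $x<0$ in $L^2((-\infty,0),dx)$ and real $\gamma\neq0$, ${}^{\gamma}\mathcal{H}$ is the self-adjoint realization with Robin boundary condition $\psi'(0)=\gamma\psi(0)$. *)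

(* Defs.v *)
From Stdlib Require Import Reals.
From Coquelicot Require Import Coquelicot.
Open Scope R_scope.

Definition poly_partial (v : nat -> R) (N : nat) (x : R) : R :=
  sum_f_R0 (fun k => v k * x ^ k) N.

(* Nonsingular potential on (-oo,0] (only the values V x with x <= 0 matter). *)
Definition nonsingular (V : R -> R) : Prop :=
  (forall x, x <= 0 ->
     filterlim V (within (fun y => y <= 0) (locally x)) (locally (V x))) /\
  (exists kappa U C x0, 0 < kappa /\ U <> 0 /\
     forall x, x <= x0 ->
       Rabs (V x - exp (kappa * x) * U) <= C * exp (kappa * x) * exp (kappa * x)) /\
  (exists v : nat -> R, v 0%nat <> 0 /\
     forall N : nat, exists C delta, 0 < delta /\
       forall x, -delta <= x <= 0 ->
         Rabs (V x - poly_partial v N x) <= C * Rabs x ^ (S N)).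

(* E is an eigenvalue of the Robin realization  gamma H = -d^2/dx^2 + V on
   L^2((-oo,0)) with boundary condition psi'(0) = gamma psi(0):
   there is a nonzero square-integrable classical solution of
   -psi'' + V psi = E psi on (-oo,0) satisfying the boundary condition. *)
Definition robin_eigenvalue (V : R -> R) (gamma E : R) : Prop :=
  exists psi dpsi : R -> R,
    (forall x, x <= 0 -> is_derive psi x (dpsi x)) /\
    (forall x, x < 0 -> is_derive dpsi x ((V x - E) * psi x)) /\
    dpsi 0 = gamma * psi 0 /\
    ex_RInt_gen (fun x => psi x ^ 2) (Rbar_locally m_infty) (at_point 0) /\
    (exists x, x < 0 /\ psi x <> 0).

(* Main.v *)
Require Import Defs.
From Stdlib Require Import Reals Lra Classical.
From Coquelicot Require Import Coquelicot.
Open Scope R_scope.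

Lemma is_derive_eq (f : R -> R) (x l l' : R) : is_derive f x l -> l = l' -> is_derive f x l'.
Proof. intros H ->; exact H. Qed.

Lemma derive_cont (f : R -> R) (x l : R) : is_derive f x l -> continuity_pt f x.
Proof.
  intros H. apply continuity_pt_filterlim. apply (ex_derive_continuous (V:=R_NormedModule) f x). exists l; exact H.
Qed.

Lemma derive_cont' (f : R -> R) (x l : R) : is_derive f x l -> continuous f x.
Proof.
  intros H. apply (ex_derive_continuous (V:=R_NormedModule) f x). exists l; exact H.
Qed.

Lemma mvt (f df : R -> R) a b : a <= b ->
  (forall x, a <= x <= b -> is_derive f x (df x)) ->
  exists c, a <= c <= b /\ f b - f a = df c * (b - a).
Proof.
  intros hab H.
  destruct (MVT_gen f a b df) as [c [hc e]].
  - intros x hx. rewrite Rmin_left in hx by lra. rewrite Rmax_right in hx by lra.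
    apply H; lra.
  - intros x hx. rewrite Rmin_left in hx by lra. rewrite Rmax_right in hx by lra.
    apply derive_cont with (df x); apply H; lra.
  - rewrite Rmin_left in hc by lra. rewrite Rmax_right in hc by lra.
    exists c; split; auto.
Qed.

Lemma mono_le (f df : R -> R) a b : a <= b ->
  (forall x, a <= x <= b -> is_derive f x (df x)) ->
  (forall x, a <= x <= b -> 0 <= df x) -> f a <= f b.
Proof.
  intros hab H H0. destruct (mvt f df a b hab H) as [c [hc e]].
  assert (0 <= df c * (b - a)) by (apply Rmult_le_pos; [apply H0; lra| lra]). lra.
Qed.

Lemma mono_lt (f df : R -> R) a b : a < b ->
  (forall x, a <= x <= b -> is_derive f x (df x)) ->
  (forall x, a <= x <= b -> 0 < df x) -> f a < f b.
Proof.
  intros hab H H0. destruct (mvt f df a b (Rlt_le _ _ hab) H) as [c [hc e]].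
  assert (0 < df c * (b - a)) by (apply Rmult_lt_0_compat; [apply H0; lra| lra]). lra.
Qed.

Lemma cont_pos (f : R -> R) a : continuous f a -> 0 < f a ->
  exists d, 0 < d /\ forall t, Rabs (t - a) < d -> 0 < f t.
Proof.
  intros Hc Hp.
  assert (H := proj1 (filterlim_locally f (f a)) Hc (mkposreal _ Hp)).
  destruct H as [d Hd]. exists d. split; [apply cond_pos|].
  intros t ht. specialize (Hd t ht). simpl in Hd.
  unfold ball in Hd; simpl in Hd; unfold AbsRing_ball in Hd; simpl in Hd.
  unfold abs, minus, plus, opp in Hd; simpl in Hd.
  apply Rabs_def2 in Hd. lra.
Qed.

Lemma cont_neg (f : R -> R) a : continuous f a -> f a < 0 ->
  exists d, 0 < d /\ forall t, Rabs (t - a) < d -> f t < 0.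
Proof.
  intros Hc Hp.
  assert (Hc' : continuous (fun x => - f x) a).
  { apply (continuous_opp f a Hc). }
  destruct (cont_pos _ a Hc') as [d [hd H]]; [lra|].
  exists d; split; auto. intros t ht; specialize (H t ht); lra.
Qed.

Lemma cont_right_ge (f : R -> R) a X : continuous f a -> a < X ->
  (forall t, a < t < X -> 0 < f t) -> 0 <= f a.
Proof.
  intros Hc hX H. destruct (Rle_or_lt 0 (f a)) as [h|h]; auto.
  destruct (cont_neg f a Hc h) as [d [hd Hd]].
  set (t := a + Rmin (d/2) ((X - a)/2)).
  assert (a < t < X).
  { unfold t. assert (0 < Rmin (d/2) ((X-a)/2)) by (apply Rmin_pos; lra).
    assert (Rmin (d/2) ((X-a)/2) <= (X-a)/2) by apply Rmin_r. lra. }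
  specialize (H t H0). assert (f t < 0); [|lra].
  apply Hd. unfold t. assert (0 < Rmin (d/2) ((X-a)/2)) by (apply Rmin_pos; lra).
  assert (Rmin (d/2) ((X-a)/2) <= d/2) by apply Rmin_l.
  rewrite Rabs_right; lra.
Qed.

Lemma D_const (c x : R) : is_derive (fun _ => c) x 0.
Proof. apply (is_derive_const (K:=R_AbsRing) (V:=R_NormedModule) c x). Qed.

Lemma D_id (x : R) : is_derive (fun y => y) x 1.
Proof. apply (is_derive_id (K:=R_AbsRing) x). Qed.

Lemma D_minus (f g : R -> R) (x a b : R) : is_derive f x a -> is_derive g x b ->
  is_derive (fun y => f y - g y) x (a - b).
Proof. intros H1 H2. apply (is_derive_minus f g x a b H1 H2). Qed.

Lemma D_plus (f g : R -> R) (x a b : R) : is_derive f x a -> is_derive g x b ->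
  is_derive (fun y => f y + g y) x (a + b).
Proof. intros H1 H2. apply (is_derive_plus f g x a b H1 H2). Qed.

Lemma deriv_S (psi dpsi g : R -> R) x dps ddps dgx :
  is_derive psi x dps -> is_derive dpsi x ddps -> is_derive g x dgx ->
  is_derive (fun y => dpsi y - g y * psi y) x (ddps - (dgx * psi x + g x * dps)).
Proof.
  intros H1 H2 H3.
  pose proof (is_derive_mult g psi x dgx dps H3 H1 ltac:(intros; apply Rmult_comm)) as Hm.
  pose proof (is_derive_minus dpsi (fun y => mult (g y) (psi y)) x _ _ H2 Hm) as Hs.
  exact Hs.
Qed.

Lemma cont_S (psi dpsi g : R -> R) x :
  continuous psi x -> continuous dpsi x -> continuous g x ->
  continuous (fun y => dpsi y - g y * psi y) x.
Proof.
  intros H1 H2 H3.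
  apply (continuous_minus (V:=R_NormedModule) dpsi (fun y => mult (g y) (psi y)) x H2).
  apply (continuous_mult g psi x H3 H1).
Qed.

Lemma inv (psi dpsi q g dg : R -> R) (x1 X : R) :
 X < 0 -> x1 <= X ->
 (forall x, x <= X -> is_derive psi x (dpsi x)) ->
 (forall x, x <= X -> is_derive dpsi x (q x * psi x)) ->
 (forall x, x1 <= x <= X -> is_derive g x (dg x)) ->
 (forall x, x1 <= x <= X -> 0 < g x) ->
 (forall x, x1 <= x <= X -> q x - dg x - g x ^ 2 < 0) ->
 (forall x, x1 <= x <= X -> 0 < q x) ->
 0 < dpsi X -> 0 < dpsi X - g X * psi X ->
 forall x, x1 <= x <= X -> 0 < dpsi x /\ 0 < dpsi x - g x * psi x.
Proof.
  intros hX hx1 Dpsi Ddpsi Dg gpos coef qpos Q1 Q2 x hx.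
  set (S := fun y => dpsi y - g y * psi y).
  change (0 < dpsi x /\ 0 < S x).
  assert (Cpsi : forall t, t <= X -> continuous psi t).
  { intros t ht. apply derive_cont' with (dpsi t). auto. }
  assert (Cdpsi : forall t, t <= X -> continuous dpsi t).
  { intros t ht. apply derive_cont' with (q t * psi t). auto. }
  assert (CS : forall t, x1 <= t <= X -> continuous S t).
  { intros t ht. apply cont_S; [apply Cpsi; lra| apply Cdpsi; lra|].
    apply derive_cont' with (dg t). auto. }
  destruct (classic (0 < dpsi x /\ 0 < S x)) as [HQ|HnQ]; [exact HQ|exfalso].
  set (E := fun t => x <= t <= X /\ ~ (0 < dpsi t /\ 0 < S t)).
  destruct (completeness E) as [a [Hub Hlub]].
  { exists X. intros t [ht _]. lra. }
  { exists x. split; [lra|exact HnQ]. }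
  assert (hxa : x <= a) by (apply Hub; split; [lra|exact HnQ]).
  assert (haX : a <= X) by (apply Hlub; intros t [ht _]; lra).
  assert (H1 : forall t, a < t <= X -> 0 < dpsi t /\ 0 < S t).
  { intros t ht. destruct (classic (0 < dpsi t /\ 0 < S t)) as [h|h]; auto.
    assert (t <= a) by (apply Hub; split; [lra|exact h]). lra. }
  assert (H3 : ~ (0 < dpsi a /\ 0 < S a)).
  { intros [h1 h2].
    destruct (cont_pos dpsi a (Cdpsi a haX) h1) as [d1 [hd1 Hd1]].
    destruct (cont_pos S a (CS a ltac:(lra)) h2) as [d2 [hd2 Hd2]].
    set (d := Rmin d1 d2).
    assert (0 < d) by (apply Rmin_pos; lra).
    assert (d <= d1) by apply Rmin_l. assert (d <= d2) by apply Rmin_r.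
    assert (a <= a - d/2); [|lra].
    apply Hlub. intros t [ht hnq].
    assert (t <= a) by (apply Hub; split; auto).
    destruct (Rle_or_lt t (a - d/2)) as [h|h]; auto.
    exfalso; apply hnq. split; [apply Hd1|apply Hd2]; rewrite Rabs_left1; lra. }
  assert (haX' : a < X).
  { destruct (Rle_lt_or_eq_dec a X haX) as [h|h]; auto. subst a. exfalso; apply H3; auto. }
  assert (H2a : 0 <= dpsi a).
  { apply (cont_right_ge dpsi a X (Cdpsi a haX) haX'). intros t ht; apply H1; lra. }
  assert (H2b : 0 <= S a).
  { apply (cont_right_ge S a X (CS a ltac:(lra)) haX'). intros t ht; apply H1; lra. }
  assert (ga := gpos a ltac:(lra)).
  destruct (Rlt_or_le (psi a) 0) as [hpa|hpa].
  -
    assert (hSa : S a > dpsi a).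
    { unfold S. assert (g a * psi a < 0) by (apply Rmult_pos_neg; lra). lra. }
    assert (hd0 : dpsi a = 0).
    { destruct (Rle_lt_or_eq_dec _ _ H2a) as [h|h]; auto. exfalso; apply H3; split; lra. }
    destruct (cont_neg psi a (Cpsi a haX) hpa) as [d [hd Hd]].
    set (t := a + Rmin (d/2) ((X - a)/2)).
    assert (0 < Rmin (d/2) ((X-a)/2)) by (apply Rmin_pos; lra).
    assert (Rmin (d/2) ((X-a)/2) <= (X-a)/2) by apply Rmin_r.
    assert (Rmin (d/2) ((X-a)/2) <= d/2) by apply Rmin_l.
    assert (ht : a < t <= X) by (unfold t; lra).
    destruct (mvt dpsi (fun y => q y * psi y) a t ltac:(lra)) as [c [hc e]].
    { intros y hy; apply Ddpsi; lra. }
    assert (psi c < 0) by (apply Hd; rewrite Rabs_right; unfold t in *; lra).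
    assert (0 < q c) by (apply qpos; lra).
    assert (q c * psi c * (t - a) < 0).
    { apply Rmult_neg_pos; [|lra]. apply Rmult_pos_neg; lra. }
    destruct (H1 t ht). lra.
  -
    assert (hSa : S a = 0).
    { destruct (Rle_lt_or_eq_dec _ _ H2a) as [h|h].
      - destruct (Rle_lt_or_eq_dec _ _ H2b) as [h'|h']; auto. exfalso; apply H3; auto.
      - unfold S in *. rewrite <- h in *.
        assert (0 <= g a * psi a) by (apply Rmult_le_pos; lra). lra. }
    assert (Hpsi : forall t, a <= t <= X -> 0 <= psi t).
    { intros t ht.
      assert (psi a <= psi t); [|lra].
      apply (mono_le psi dpsi a t ltac:(lra)).
      - intros y hy; apply Dpsi; lra.
      - intros y hy. destruct (Rle_lt_or_eq_dec a y ltac:(lra)) as [h|h].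
        + destruct (H1 y ltac:(lra)); lra.
        + subst; lra. }
    assert (Hdec : forall t, a < t < X -> S X < S t).
    { intros t ht.
      assert (- S t < - S X); [|lra].
      apply (mono_lt (fun y => - S y)
        (fun y => - (q y * psi y - (dg y * psi y + g y * dpsi y))) t X ltac:(lra)).
      - intros y hy.
        apply (is_derive_opp (fun y => S y)).
        apply deriv_S; [apply Dpsi; lra|apply Ddpsi; lra|apply Dg; lra].
      - intros y hy.
        assert (hy1 : x1 <= y <= X) by lra.
        destruct (H1 y ltac:(lra)) as [_ hS].
        specialize (coef y hy1). specialize (gpos y hy1).
        assert (hp := Hpsi y ltac:(lra)).
        unfold S in hS.
        assert (e : q y * psi y - (dg y * psi y + g y * dpsi y)
                    = (q y - dg y - g y ^ 2) * psi y - g y * (dpsi y - g y * psi y)) by ring.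
        rewrite e.
        assert ((q y - dg y - g y ^ 2) * psi y <= 0).
        { apply Rmult_le_0_r; lra. }
        assert (0 < g y * (dpsi y - g y * psi y)) by (apply Rmult_lt_0_compat; lra).
        lra. }
    assert (0 <= S a - S X).
    { apply (cont_right_ge (fun y => S y - S X) a X); auto.
      - apply (continuous_minus (V:=R_NormedModule) S (fun _ => S X) a).
        + apply CS; lra.
        + apply continuous_const.
      - intros t ht. specialize (Hdec t ht). lra. }
    unfold S in *. lra.
Qed.

Lemma near0 (psi dpsi : R -> R) gamma :
  (forall x, x <= 0 -> is_derive psi x (dpsi x)) ->
  psi 0 = 1 -> dpsi 0 = gamma ->
  forall eps, 0 < eps -> exists c, -eps < c < 0 /\ Rabs (dpsi c - gamma) < eps /\ Rabs (psi c - 1) < eps.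
Proof.
  intros D p0 d0 eps heps.
  assert (H0 := D 0 (Rle_refl 0)). rewrite d0 in H0.
  apply is_derive_Reals in H0.
  set (e := eps / 3).
  destruct (H0 e ltac:(unfold e; lra)) as [del Hdel].
  set (eta := Rmin del (eps / (Rabs gamma + e + 1))).
  assert (hg : 0 < Rabs gamma + e + 1) by (pose proof (Rabs_pos gamma); unfold e; lra).
  assert (0 < eps / (Rabs gamma + e + 1)) by (apply Rdiv_lt_0_compat; lra).
  assert (heta : 0 < eta) by (apply Rmin_pos; [apply cond_pos|lra]).
  assert (eta <= del) by apply Rmin_l.
  assert (eta <= eps / (Rabs gamma + e + 1)) by apply Rmin_r.
  set (h := - eta / 2).
  assert (hh : h < 0) by (unfold h; lra).
  destruct (mvt psi dpsi h (h/2) ltac:(lra)) as [c [hc ec]].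
  { intros y hy; apply D; lra. }
  assert (A1 := Hdel h ltac:(lra) ltac:(rewrite Rabs_left; unfold h; lra)).
  assert (A2 := Hdel (h/2) ltac:(lra) ltac:(rewrite Rabs_left; unfold h; lra)).
  rewrite Rplus_0_l, p0 in A1, A2.
  set (a1 := (psi h - 1) / h) in *.
  set (a2 := (psi (h/2) - 1) / (h/2)) in *.
  assert (E1 : psi h = 1 + h * a1) by (unfold a1; field; lra).
  assert (E2 : psi (h/2) = 1 + (h/2) * a2) by (unfold a2; field; lra).
  assert (Ed : dpsi c = 2 * a1 - a2).
  { rewrite E1, E2 in ec.
    apply Rmult_eq_reg_r with (h/2 - h); [|lra]. rewrite <- ec. field. }
  assert (eps / (Rabs gamma + e + 1) <= eps).
  { unfold Rdiv. rewrite <- (Rmult_1_r eps) at 2. apply Rmult_le_compat_l; [lra|].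
    rewrite <- Rinv_1. apply Rinv_le_contravar; [lra|]. pose proof (Rabs_pos gamma); unfold e; lra. }
  exists c. split; [unfold h in *; lra|]. split.
  - rewrite Ed. apply Rabs_def2 in A1. apply Rabs_def2 in A2. apply Rabs_def1; unfold e in *; lra.
  - destruct (Rlt_or_le c 0) as [hc0|hc0]; [|lra].
    assert (A3 := Hdel c ltac:(lra) ltac:(rewrite Rabs_left; unfold h in *; lra)).
    rewrite Rplus_0_l, p0 in A3.
    assert (E3 : psi c - 1 = c * ((psi c - 1) / c)) by (field; lra).
    rewrite E3, Rabs_mult.
    assert (Rabs ((psi c - 1)/c) < Rabs gamma + e).
    { apply Rabs_def2 in A3. destruct A3.
      pose proof (Rle_abs gamma). pose proof (Rle_abs (-gamma)). rewrite Rabs_Ropp in *.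
      apply Rabs_def1; lra. }
    assert (Rabs c <= eta) by (rewrite Rabs_left; unfold h in *; lra).
    assert (Rabs c * Rabs ((psi c - 1)/c) <= eta * (Rabs gamma + e)).
    { apply Rmult_le_compat; try apply Rabs_pos; lra. }
    assert (eta * (Rabs gamma + e) < eps).
    { apply Rle_lt_trans with (eps / (Rabs gamma + e + 1) * (Rabs gamma + e)).
      - apply Rmult_le_compat_r; [pose proof (Rabs_pos gamma); unfold e; lra| lra].
      - unfold Rdiv. rewrite Rmult_assoc.
        assert ( / (Rabs gamma + e + 1) * (Rabs gamma + e) < 1).
        { apply Rmult_lt_reg_l with (Rabs gamma + e + 1); [lra|].
          rewrite <- Rmult_assoc, Rinv_r by lra. lra. }
        assert (eps * (/ (Rabs gamma + e + 1) * (Rabs gamma + e)) < eps * 1)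
          by (apply Rmult_lt_compat_l; lra). lra. }
    lra.
Qed.

Lemma core (V0 m psi dpsi : R -> R) (I k gamma : R) :
  (forall x, 0 <= V0 x) ->
  (forall x, is_derive m x (- V0 x)) ->
  (forall x, x <= 0 -> 0 <= m x <= I) ->
  0 < k -> I + k < gamma ->
  (forall x, x <= 0 -> is_derive psi x (dpsi x)) ->
  (forall x, x < 0 -> is_derive dpsi x ((V0 x + k ^ 2) * psi x)) ->
  psi 0 = 1 -> dpsi 0 = gamma ->
  (forall x0 c, 0 < c -> ~ (forall x, x <= x0 -> c <= psi x ^ 2)) ->
  False.
Proof.
  intros V0pos Dm mb hk hg Dpsi Ddpsi p0 d0 Bd.
  assert (hI : 0 <= I) by (destruct (mb 0 (Rle_refl 0)); lra).
  set (dl := (gamma - I - k) / 2).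
  assert (hdl : 0 < dl) by (unfold dl; lra).
  set (gp := I + k + dl).
  set (beta := dl * k).
  assert (hbeta : 0 < beta) by (unfold beta; nra).
  set (g1 := fun x => gp - m x - beta * x).
  assert (Dg1 : forall x : R, is_derive g1 x (V0 x - beta)).
  { intros x. unfold g1.
    apply (is_derive_eq _ _ ((0 - (- V0 x)) - (beta * 1))).
    - apply (D_minus (fun x => gp - m x) (fun x => beta * x)).
      + apply (D_minus (fun _ => gp) m). apply D_const. apply Dm.
      + apply is_derive_scal. apply D_id.
    - ring. }
  set (eps := Rmin (1/2) (dl / (2 * (1 + gp + 2 * beta)))).
  assert (hgp : 0 < gp) by (unfold gp; lra).
  assert (heps : 0 < eps).
  { apply Rmin_pos; [lra|]. apply Rdiv_lt_0_compat; lra. }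
  assert (heps1 : eps <= 1/2) by apply Rmin_l.
  assert (heps2 : eps * (1 + gp + 2 * beta) <= dl / 2).
  { assert (eps <= dl / (2 * (1 + gp + 2 * beta))) by apply Rmin_r.
    apply Rle_trans with (dl / (2 * (1 + gp + 2 * beta)) * (1 + gp + 2 * beta)).
    - apply Rmult_le_compat_r; lra.
    - right. field. lra. }
  destruct (near0 psi dpsi gamma Dpsi p0 d0 eps heps) as [xi [hxi [hd hp]]].
  apply Rabs_def2 in hd. apply Rabs_def2 in hp.
  assert (hpxi : 0 < psi xi) by lra.
  assert (heps3 : eps <= dl / 2) by nra.
  assert (hdxi : 0 < dpsi xi) by (unfold dl in *; lra).
  assert (hSxi : 0 < dpsi xi - g1 xi * psi xi).
  { assert (g1 xi <= gp + beta * eps).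
    { unfold g1. destruct (mb xi ltac:(lra)). nra. }
    assert (0 <= g1 xi).
    { unfold g1. destruct (mb xi ltac:(lra)). unfold gp in *. nra. }
    assert (g1 xi * psi xi <= (gp + beta * eps) * (1 + eps)).
    { apply Rmult_le_compat; lra. }
    assert (gamma = gp + dl) by (unfold gp, dl; field).
    assert (beta * eps * eps <= beta * eps * 1) by (apply Rmult_le_compat_l; nra).
    assert ((gp + beta * eps) * (1 + eps) <= gp + eps * (gp + 2 * beta)).
    { replace ((gp + beta * eps) * (1 + eps)) with (gp + eps * gp + beta * eps + beta * eps * eps) by ring.
      lra. }
    assert (eps * (gp + 2 * beta) < dl) by nra.
    lra. }
  assert (P1 : forall x, x <= xi -> 0 < dpsi x /\ 0 < dpsi x - g1 x * psi x).
  { intros x hx.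
    apply (inv psi dpsi (fun y => V0 y + k ^ 2) g1 (fun y => V0 y - beta) x xi); auto; try lra.
    - intros y hy; apply Dpsi; lra.
    - intros y hy; apply Ddpsi; lra.
    - intros y hy. unfold g1. destruct (mb y ltac:(lra)). unfold gp. nra.
    - intros y hy. unfold g1. destruct (mb y ltac:(lra)).
      assert (k + dl <= gp - m y - beta * y) by (unfold gp; nra).
      assert ((k + dl) ^ 2 <= (gp - m y - beta * y) ^ 2).
      { apply pow_incr. nra. }
      unfold beta in *. nra.
    - intros y hy. pose proof (V0pos y). nra. }
  assert (Pos : forall x, x <= xi -> 0 < psi x).
  { intros x0 hx0. destruct (Rlt_or_le 0 (psi x0)) as [h|h]; auto. exfalso.
    assert (hlt : psi (x0 - 1) < psi x0).
    { apply (mono_lt psi dpsi); [lra| |].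
      - intros y hy; apply Dpsi; lra.
      - intros y hy; apply P1; lra. }
    apply (Bd (x0 - 1) (psi (x0 - 1) ^ 2)). { nra. }
    intros y hy.
    assert (psi y <= psi (x0 - 1)).
    { apply (mono_le psi dpsi); [lra| |].
      - intros z hz; apply Dpsi; lra.
      - intros z hz; left; apply P1; lra. }
    nra. }
  set (X := Rmin xi ((gp - I - 2 * k) / beta)).
  assert (hX1 : X <= xi) by apply Rmin_l.
  assert (hX2 : X <= (gp - I - 2 * k) / beta) by apply Rmin_r.
  assert (hX3 : beta * X <= gp - I - 2 * k).
  { apply Rle_trans with (beta * ((gp - I - 2 * k) / beta)).
    - apply Rmult_le_compat_l; lra.
    - right; field; lra. }
  set (xs := X - / k).
  assert (hik : 0 < / k) by (apply Rinv_0_lt_compat; lra).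
  set (g2 := fun x => I + 2 / (x - xs) - m x).
  set (dg2 := fun x => - (2 / (x - xs) ^ 2) + V0 x).
  assert (Dg2 : forall x : R, xs < x -> is_derive g2 x (dg2 x)).
  { intros x hx. unfold g2, dg2.
    assert (Dr : is_derive (fun x => I + 2 / (x - xs)) x (- (2 / (x - xs) ^ 2))).
    { eapply is_derive_eq. auto_derive. intro; lra. reflexivity. field. lra. }
    apply (is_derive_eq _ _ ((- (2 / (x - xs) ^ 2)) - (- V0 x))).
    - apply (D_minus (fun x => I + 2 / (x - xs)) m). exact Dr. apply Dm.
    - ring. }
  assert (P2 : forall x, xs < x <= X -> 0 < dpsi x - g2 x * psi x).
  { intros x hx.
    apply (inv psi dpsi (fun y => V0 y + k ^ 2) g2 dg2 x X); try lra.
    - intros y hy; apply Dpsi; lra.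
    - intros y hy; apply Ddpsi; lra.
    - intros y hy; apply Dg2; lra.
    - intros y hy. unfold g2. destruct (mb y ltac:(lra)).
      assert (0 < 2 / (y - xs)) by (apply Rdiv_lt_0_compat; lra). lra.
    - intros y hy. unfold g2, dg2. destruct (mb y ltac:(lra)).
      set (u := 2 / (y - xs)).
      assert (hu : 2 * k <= u).
      { unfold u. apply Rmult_le_reg_r with (y - xs); [lra|].
        replace (2 / (y - xs) * (y - xs)) with 2 by (field; lra).
        assert (y - xs <= / k) by (unfold xs; lra).
        assert (hkk : k * (y - xs) <= k * / k) by (apply Rmult_le_compat_l; lra).
        rewrite Rinv_r in hkk by lra. lra. }
      assert (e : 2 / (y - xs) ^ 2 = u ^ 2 / 2) by (unfold u; field; lra).
      rewrite e.
      assert (u <= I + u - m y) by lra.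
      assert (u ^ 2 <= (I + u - m y) ^ 2) by (apply pow_incr; lra).
      nra.
    - intros y hy. pose proof (V0pos y). nra.
    - apply P1; lra.
    - assert (g2 X <= g1 X).
      { unfold g2, g1. replace (X - xs) with (/ k) by (unfold xs; ring).
        replace (2 / / k) with (2 * k) by (field; lra). lra. }
      destruct (P1 X hX1). assert (0 < psi X) by (apply Pos; lra). nra. }
  assert (hxs : xs < X) by (unfold xs; lra).
  assert (hpxs : 0 < psi xs) by (apply Pos; lra).
  assert (hdxs : 0 < dpsi xs) by (apply P1; lra).
  assert (Cd : continuous (fun y => dpsi xs + 1 - dpsi y) xs).
  { apply (continuous_minus (V:=R_NormedModule) (fun _ => dpsi xs + 1) dpsi xs).
    apply continuous_const. apply derive_cont' with ((V0 xs + k ^ 2) * psi xs). apply Ddpsi; lra. }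
  destruct (cont_pos _ xs Cd ltac:(lra)) as [d [hd0 Hd]].
  set (r := Rmin (d / 2) (Rmin (/ k) (psi xs / (dpsi xs + 1)))).
  assert (hr : 0 < r).
  { apply Rmin_pos; [lra|]. apply Rmin_pos; [lra|]. apply Rdiv_lt_0_compat; lra. }
  assert (r <= d / 2) by apply Rmin_l.
  assert (r <= / k) by (eapply Rle_trans; [apply Rmin_r| apply Rmin_l]).
  assert (hr3 : r <= psi xs / (dpsi xs + 1)) by (eapply Rle_trans; [apply Rmin_r| apply Rmin_r]).
  set (x := xs + r).
  assert (hx : xs < x <= X) by (unfold x, xs in *; lra).
  specialize (P2 x hx).
  assert (hdx : dpsi x < dpsi xs + 1).
  { assert (0 < dpsi xs + 1 - dpsi x); [|lra]. apply Hd. unfold x. rewrite Rabs_right; lra. }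
  assert (hpx : psi xs <= psi x).
  { apply (mono_le psi dpsi); [lra| |].
    - intros z hz; apply Dpsi; lra.
    - intros z hz; left; apply P1; lra. }
  assert (hg2 : 2 / r <= g2 x).
  { unfold g2. replace (x - xs) with r by (unfold x; ring). destruct (mb x ltac:(lra)). lra. }
  assert (h2r : 2 * (dpsi xs + 1) <= 2 / r * psi xs).
  { apply Rmult_le_reg_r with r; [lra|].
    replace (2 / r * psi xs * r) with (2 * psi xs) by (field; lra).
    apply Rmult_le_reg_r with (/ (dpsi xs + 1)). apply Rinv_0_lt_compat; lra.
    replace (2 * (dpsi xs + 1) * r * / (dpsi xs + 1)) with (2 * r) by (field; lra).
    unfold Rdiv in hr3. lra. }
  assert (0 < 2 / r) by (apply Rdiv_lt_0_compat; lra).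
  assert (2 / r * psi xs <= g2 x * psi x).
  { apply Rmult_le_compat; lra. }
  lra.
Qed.

Lemma ballR (x e y : R) : ball x e y <-> Rabs (y - x) < e.
Proof. reflexivity. Qed.

Lemma Rmin_lip (y x : R) : Rabs (Rmin y 0 - Rmin x 0) <= Rabs (y - x).
Proof.
  unfold Rmin. destruct (Rle_dec y 0); destruct (Rle_dec x 0);
  unfold Rabs; repeat destruct Rcase_abs; lra.
Qed.

Lemma V0_cont (V : R -> R) :
  (forall x, x <= 0 -> filterlim V (within (fun y => y <= 0) (locally x)) (locally (V x))) ->
  forall x, continuous (fun y => V (Rmin y 0)) x.
Proof.
  intros HV x. unfold continuous.
  apply filterlim_comp with (G := within (fun y => y <= 0) (locally (Rmin x 0))).
  - intros P HP. unfold within in HP. destruct HP as [e He].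
    exists e. intros y hy. apply He.
    + apply ballR. apply ballR in hy. eapply Rle_lt_trans; [apply Rmin_lip|exact hy].
    + apply Rmin_r.
  - apply HV. apply Rmin_r.
Qed.

Lemma RInt_V (V : R -> R) :
  nonsingular V -> (forall x, x <= 0 -> 0 <= V x) ->
  exists I, 0 <= I /\ RInt_gen V (Rbar_locally m_infty) (at_point 0) = I /\
    exists m : R -> R, (forall x, is_derive m x (- V (Rmin x 0))) /\
       (forall x, x <= 0 -> 0 <= m x <= I).
Proof.
  intros [HC [Hdec _]] Vpos.
  set (V0 := fun y => V (Rmin y 0)).
  assert (C0 : forall x, continuous V0 x) by (apply V0_cont; exact HC).
  assert (V0pos : forall x, 0 <= V0 x) by (intros x; apply Vpos, Rmin_r).
  assert (Ex : forall a b, ex_RInt V0 a b).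
  { intros a b. apply (ex_RInt_continuous (V:=R_CompleteNormedModule)). intros z _. apply C0. }
  set (F := fun x => RInt V0 0 x).
  assert (DF : forall x : R, is_derive F x (V0 x)).
  { intros x. apply is_derive_RInt with 0.
    - apply filter_forall. intros b. apply (RInt_correct (V:=R_CompleteNormedModule)). apply Ex.
    - apply C0. }
  set (m := fun x => - F x).
  assert (Dm : forall x : R, is_derive m x (- V0 x)).
  { intros x. apply (is_derive_opp F x (V0 x) (DF x)). }
  assert (F0 : F 0 = 0) by (unfold F; rewrite RInt_point; reflexivity).
  assert (mdec : forall x y, x <= y -> m y <= m x).
  { intros x y hxy. unfold m. assert (F x <= F y); [|lra].
    apply (mono_le F V0 x y hxy); auto. }
  assert (mpos : forall x, x <= 0 -> 0 <= m x).
  { intros x hx. assert (m 0 = 0) by (unfold m; rewrite F0; ring).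
    pose proof (mdec x 0 hx). lra. }
  destruct Hdec as [kap [U [C [x0 [hkap [hU Hb]]]]]].
  set (x1 := Rmin x0 0).
  set (K := Rabs U + Rabs C).
  set (G := fun x => m x + K / kap * exp (kap * x)).
  assert (DG : forall x : R, is_derive G x (- V0 x + K * exp (kap * x))).
  { intros x. unfold G. apply (is_derive_eq _ _ (- V0 x + K / kap * (kap * 1 * exp (kap * x)))).
    - apply (D_plus m (fun x => K / kap * exp (kap * x))). apply Dm.
      apply is_derive_scal. eapply is_derive_eq. auto_derive. auto. reflexivity. ring.
    - field. lra. }
  assert (Vle : forall x, x <= x1 -> V0 x <= K * exp (kap * x)).
  { intros x hx. assert (hx0 : x <= x0) by (eapply Rle_trans; [exact hx| apply Rmin_l]).
    assert (hx1 : x <= 0) by (eapply Rle_trans; [exact hx| apply Rmin_r]).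
    unfold V0. rewrite Rmin_left by lra.
    specialize (Hb x hx0).
    assert (Hb' : -(C * exp (kap * x) * exp (kap * x)) <= V x - exp (kap * x) * U <= C * exp (kap * x) * exp (kap * x)).
    { pose proof (Rle_abs (V x - exp (kap * x) * U)). pose proof (Rle_abs (-(V x - exp (kap * x) * U))). rewrite Rabs_Ropp in *. lra. }
    assert (he : 0 < exp (kap * x)) by apply exp_pos.
    assert (he1 : exp (kap * x) <= 1).
    { rewrite <- exp_0. destruct (Rle_lt_or_eq_dec (kap * x) 0 ltac:(nra)) as [h|h].
      left; apply exp_increasing; exact h. rewrite h; lra. }
    pose proof (Rle_abs U). pose proof (Rle_abs (-U)). rewrite Rabs_Ropp in *.
    pose proof (Rle_abs C).
    assert (C * exp (kap * x) * exp (kap * x) <= Rabs C * exp (kap * x)).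
    { assert (C * exp (kap * x) <= Rabs C).
      { destruct (Rle_or_lt 0 C). 
        - assert (C * exp (kap * x) <= C * 1) by (apply Rmult_le_compat_l; lra). lra.
        - assert (C * exp (kap * x) < 0) by (apply Rmult_neg_pos; lra). pose proof (Rabs_pos C). lra. }
      assert (C * exp (kap * x) * exp (kap * x) <= Rabs C * exp (kap * x)) by (apply Rmult_le_compat_r; lra).
      lra. }
    assert (exp (kap * x) * U <= exp (kap * x) * Rabs U) by (apply Rmult_le_compat_l; lra).
    unfold K. destruct Hb'. lra. }
  set (B := G x1).
  assert (mB : forall x, x <= 0 -> m x <= B).
  { intros x hx. destruct (Rle_or_lt x x1) as [h|h].
    - assert (m x <= G x).
      { unfold G. assert (0 <= K / kap * exp (kap * x)).
        { apply Rmult_le_pos; [apply Rdiv_le_0_compat; [unfold K; pose proof (Rabs_pos U); pose proof (Rabs_pos C); lra|lra]|left; apply exp_pos]. }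
        lra. }
      assert (G x <= G x1); [|unfold B; lra].
      apply (mono_le G (fun y => - V0 y + K * exp (kap * y)) x x1 h); auto.
      intros y hy. specialize (Vle y ltac:(lra)). lra.
    - assert (m x <= m x1) by (apply mdec; lra).
      assert (m x1 <= G x1).
      { unfold G. assert (0 <= K / kap * exp (kap * x1)).
        { apply Rmult_le_pos; [apply Rdiv_le_0_compat; [unfold K; pose proof (Rabs_pos U); pose proof (Rabs_pos C); lra|lra]|left; apply exp_pos]. }
        lra. }
      unfold B; lra. }
  set (E := fun y => exists x, x <= 0 /\ y = m x).
  destruct (completeness E) as [I [Hub Hlub]].
  { exists B. intros y [x [hx ->]]. apply mB; auto. }
  { exists (m 0). exists 0. split; [lra|auto]. }
  assert (mI : forall x, x <= 0 -> m x <= I) by (intros x hx; apply Hub; exists x; auto).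
  assert (hI : 0 <= I) by (pose proof (mI 0 (Rle_refl 0)); pose proof (mpos 0 (Rle_refl 0)); lra).
  exists I. split; [exact hI|]. split.
  2:{ exists m. split; [exact Dm|]. intros x hx; split; auto. }
  assert (LF : filterlim F (Rbar_locally m_infty) (locally (- I))).
  { apply filterlim_locally. intros eps.
    assert (exists x, x <= 0 /\ I - eps < m x).
    { apply NNPP. intros Hn.
      assert (I <= I - eps); [|pose proof (cond_pos eps); lra].
      apply Hlub. intros y [x [hx ->]].
      destruct (Rle_or_lt (m x) (I - eps)) as [h|h]; auto.
      exfalso; apply Hn; exists x; auto. }
    destruct H as [xe [hxe Hxe]].
    exists xe. intros x hx. apply ballR.
    assert (m xe <= m x) by (apply mdec; lra).
    assert (m x <= I) by (apply mI; lra).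
    unfold m in *. rewrite Rabs_right; lra. }
  assert (H0 : is_RInt_gen (Derive F) (Rbar_locally m_infty) (at_point 0) (0 - - I)).
  { replace (0 - - I) with (F 0 - - I) by (rewrite F0; reflexivity).
    apply is_RInt_gen_Derive.
    - apply Filter_prod with (fun _ => True) (fun _ => True).
      + exists 0; auto. + exact Logic.I.
      + intros a b _ _ t _; exists (V0 t); apply DF.
    - apply Filter_prod with (fun _ => True) (fun _ => True).
      + exists 0; auto. + exact Logic.I.
      + intros a b _ _ t _. eapply continuous_ext; [|apply (C0 t)]. intros s; symmetry. apply is_derive_unique, DF.
    - exact LF.
    - intros P HP. unfold filtermap, at_point. exact (locally_singleton _ _ HP). }
  apply is_RInt_gen_unique.
  replace I with (0 - - I) by ring.
  apply (is_RInt_gen_ext (Derive F)).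
  - apply Filter_prod with (fun x => x < 0) (fun y => y = 0).
    + exists 0; auto. + reflexivity.
    + intros a b ha hb t ht. simpl in ht. subst b.
      rewrite Rmin_left in ht by lra. rewrite Rmax_right in ht by lra.
      rewrite (is_derive_unique _ _ _ (DF t)). unfold V0. rewrite Rmin_left by lra. reflexivity.
  - exact H0.
Qed.

Lemma L2bd (f : R -> R) :
  ex_RInt_gen f (Rbar_locally m_infty) (at_point 0) ->
  (forall x, x <= 0 -> continuous f x) ->
  forall x0 c, 0 < c -> ~ (forall x, x <= x0 -> c <= f x).
Proof.
  intros [l Hl] Cf x0 c hc Hf.
  assert (Ex : forall a b, a <= 0 -> b <= 0 -> ex_RInt f a b).
  { intros a b ha hb. apply (ex_RInt_continuous (V:=R_CompleteNormedModule)).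
    intros z hz. apply Cf. destruct hz as [_ hz]. eapply Rle_trans; [exact hz|].
    apply Rmax_lub; auto. }
  assert (H1 := Hl (ball l (mkposreal 1 Rlt_0_1)) (locally_ball l _)).
  destruct H1 as [Q Rr HQ HR H].
  destruct HQ as [M HM].
  set (x1 := Rmin (Rmin x0 0) (M - 1)).
  assert (hx1a : x1 <= x0) by (unfold x1; eapply Rle_trans; [apply Rmin_l|apply Rmin_l]).
  assert (hx1b : x1 <= 0) by (unfold x1; eapply Rle_trans; [apply Rmin_l|apply Rmin_r]).
  assert (hx1c : x1 <= M - 1) by (unfold x1; apply Rmin_r).
  set (r1 := RInt f x1 0).
  set (x := x1 - (Rabs l + 2 + Rabs r1) / c).
  assert (hd : 0 < (Rabs l + 2 + Rabs r1) / c).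
  { apply Rdiv_lt_0_compat; [pose proof (Rabs_pos l); pose proof (Rabs_pos r1); lra|lra]. }
  assert (hx : x < M) by (unfold x; lra).
  destruct (H x 0 (HM x hx) HR) as [y [Hy By]].
  assert (By' : Rabs (y - l) < 1) by exact By.
  apply (is_RInt_unique (V:=R_CompleteNormedModule)) in Hy.
  assert (E1 : RInt f x 0 = RInt f x x1 + r1).
  { unfold r1. symmetry. apply (RInt_Chasles (V:=R_CompleteNormedModule)); apply Ex; unfold x; lra. }
  assert (E2 : c * (x1 - x) <= RInt f x x1).
  { assert (RInt (fun _ => c) x x1 <= RInt f x x1).
    { apply RInt_le; [unfold x; lra| |apply Ex; unfold x; lra|].
      - apply ex_RInt_const.
      - intros t ht. apply Hf. lra. }
    rewrite RInt_const in H0. simpl in H0. unfold scal in H0; simpl in H0. unfold mult in H0; simpl in H0. lra. }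
  assert (E3 : c * (x1 - x) = Rabs l + 2 + Rabs r1) by (unfold x; field; lra).
  pose proof (Rle_abs l). pose proof (Rle_abs (- r1)). rewrite Rabs_Ropp in *.
  pose proof (Rle_abs (y - l)).
  assert (Hy' : @eq R (RInt f x 0) y) by exact Hy.
  assert (E1' : @eq R (RInt f x 0) (RInt f x x1 + r1)) by exact E1.
  lra.
Qed.

Theorem proposition6 (V : R -> R) (gamma_c : R) (Egam : R -> R) :
  nonsingular V ->
  (forall x, x <= 0 -> 0 <= V x) ->
  0 < gamma_c ->
  (forall gamma, 0 < gamma ->
     ((exists E, E < 0 /\ robin_eigenvalue V gamma E) <-> gamma_c < gamma)) ->
  (forall gamma, gamma_c < gamma ->
     Egam gamma < 0 /\ robin_eigenvalue V gamma (Egam gamma) /\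
     (forall E, E < 0 -> robin_eigenvalue V gamma E -> E = Egam gamma)) ->
  filterlim Egam (at_right gamma_c) (locally 0) ->
  gamma_c <= RInt_gen V (Rbar_locally m_infty) (at_point 0).
Proof.
  intros Hns Vpos hgc Hiff Huniq Hlim.
  destruct (RInt_V V Hns Vpos) as [I [hI [HRI [m [Dm mb]]]]]. rewrite HRI.
  assert (Key : forall gamma, gamma_c < gamma -> gamma <= I + sqrt (- Egam gamma)).
  { intros gamma hg. destruct (Huniq gamma hg) as [hE [Hrob _]].
    set (E := Egam gamma) in *.
    set (k := sqrt (- E)).
    assert (hk : 0 < k) by (apply sqrt_lt_R0; lra).
    destruct (Rle_or_lt gamma (I + k)) as [h|h]; auto. exfalso.
    destruct Hrob as [psi [dpsi [Dp [Ddp [BC [L2 Hnz]]]]]].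
    assert (p0 : psi 0 <> 0).
    { intro h0. assert (gamma_c < gamma_c / 2); [|lra].
      apply (Hiff (gamma_c/2) ltac:(lra)). exists E. split; auto.
      exists psi, dpsi. split; [exact Dp|]. split; [exact Ddp|]. split; [rewrite BC, h0; ring|]. split; [exact L2|exact Hnz]. }
    set (s := / psi 0).
    apply (core (fun y => V (Rmin y 0)) m (fun x => s * psi x) (fun x => s * dpsi x) I k gamma); auto.
    - intros x. apply Vpos, Rmin_r.
    - intros x hx. apply is_derive_scal. apply Dp; auto.
    - intros x hx. apply (is_derive_eq _ _ (s * ((V x - E) * psi x))).
      + apply is_derive_scal. apply Ddp; auto.
      + rewrite Rmin_left by lra.
        assert (k ^ 2 = - E) by (unfold k; simpl; rewrite Rmult_1_r; apply sqrt_sqrt; lra).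
        rewrite H. ring.
    - unfold s. field. auto.
    - rewrite BC. unfold s. field. auto.
    - intros x0 c hc Hc.
      apply (L2bd (fun x => psi x ^ 2) L2) with x0 (c * psi 0 ^ 2).
      + intros x hx. apply derive_cont' with (INR 2 * dpsi x * psi x ^ Init.Nat.pred 2).
        apply is_derive_pow. apply Dp; auto.
      + assert (0 < psi 0 * psi 0) by (apply Rsqr_pos_lt; auto).
        apply Rmult_lt_0_compat; [exact hc|]. simpl. rewrite Rmult_1_r. exact H.
      + intros x hx. specialize (Hc x hx).
        replace (psi x ^ 2) with ((s * psi x) ^ 2 * psi 0 ^ 2) by (unfold s; field; auto).
        apply Rmult_le_compat_r; [apply pow2_ge_0|exact Hc]. }
  destruct (Rle_or_lt gamma_c I) as [h|h]; auto. exfalso.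
  set (eps := (gamma_c - I) / 2).
  assert (heps : 0 < eps) by (unfold eps; lra).
  assert (hl := proj1 (filterlim_locally Egam 0) Hlim (mkposreal (eps * eps) ltac:(nra))).
  unfold at_right, within in hl. destruct hl as [d Hd].
  set (g := gamma_c + Rmin (d / 2) eps).
  assert (0 < Rmin (d / 2) eps) by (apply Rmin_pos; [pose proof (cond_pos d); lra|lra]).
  assert (Rmin (d/2) eps <= d/2) by apply Rmin_l.
  assert (Rmin (d/2) eps <= eps) by apply Rmin_r.
  assert (hg : gamma_c < g) by (unfold g; lra).
  assert (hb : Rabs (Egam g - 0) < eps * eps).
  { apply (Hd g); [|exact hg]. apply ballR. unfold g. rewrite Rabs_right; pose proof (cond_pos d); lra. }
  destruct (Huniq g hg) as [hE _].
  rewrite Rminus_0_r, Rabs_left in hb by lra.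
  assert (sqrt (- Egam g) < eps).
  { rewrite <- (sqrt_square eps) by lra. apply sqrt_lt_1; nra. }
  specialize (Key g hg). unfold g, eps in *. lra.
Qed.
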